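(* If $(S,K,I)$ is a split graph, then the factor graph $\Phi(S)$ cannot contain an induced path $v_1v_2v_3v_4$ with $\sigma_{23}=1$ and $d_1\leq d_2\geq d_4$.
   Context: A split graph $(S,K,I)$ is a graph $S$ together with a fixed partition $V(S)=K\dot\cup I$, where $K$ is a clique and $I$ is an independent set. For a vertex $v_i$ of $S$, $N_i$ denotes its open neighborhood in $S$ and $d_i=|N_i|$; $\eta_{uv}=|N_u\cap N_v|$. The factor graph $\Phi(S)$ is the loopless multigraph with vertex set $I$ in which, for distinct $u,v\in I$, there is one edge joining $u$ and $v$ for each 2-switch of $S$ acting on $u$ and $v$ (a 2-switch replaces edges $ab,cd$ with $ac,bd$ when $ab,cd\in E(S)$ and $ac,bd\notin E(S)$); equivalently, the multiplicity of $uv$ is $\sigma_{uv}=(d_u-\eta_{uv})(d_v-\eta_{uv})$, and $u,v$ are adjacent iff $\sigma_{uv}>0$; $\sigma_{ij}$ denotes $\sigma_{v_iv_j}$. An induced path in $\Phi(S)$ consists of distinct vertices with consecutive ones adjacent and no other pair adjacent (multiplicities ignored). *)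

(* Defs.v *)
From mathcomp Require Import all_boot.
Set Implicit Arguments. Unset Strict Implicit. Unset Printing Implicit Defensive.

Definition simple_graph (T : finType) (e : rel T) : Prop :=
  symmetric e /\ irreflexive e.

Definition split_graph (T : finType) (e : rel T) (K I : {set T}) : Prop :=
  [/\ simple_graph e,
      [disjoint K & I], K :|: I = [set: T],
      {in K &, forall u v, u != v -> e u v} &
      {in I &, forall u v, ~~ e u v}].

Section FactorGraph.
Variables (T : finType) (e : rel T).

Definition nbhd (v : T) : {set T} := [set w | e v w].
Definition deg (v : T) : nat := #|nbhd v|.
Definition eta (u v : T) : nat := #|nbhd u :&: nbhd v|.
(* multiplicity of uv in the factor graph Phi(S) *)
Definition sigma (u v : T) : nat := (deg u - eta u v) * (deg v - eta u v).

Definition phi_adj (I : {set T}) (u v : T) : bool :=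
  [&& u \in I, v \in I, u != v & 0 < sigma u v].

Definition phi_induced_P4 (I : {set T}) (v1 v2 v3 v4 : T) : Prop :=
  [/\ v1 \in I, v2 \in I, v3 \in I & v4 \in I] /\
  uniq [:: v1; v2; v3; v4] /\
  [/\ phi_adj I v1 v2, phi_adj I v2 v3 & phi_adj I v3 v4] /\
  [/\ ~~ phi_adj I v1 v3, ~~ phi_adj I v1 v4 & ~~ phi_adj I v2 v4].
End FactorGraph.

(* Main.v *)
Require Import Defs.
From mathcomp Require Import all_boot.
Set Implicit Arguments. Unset Strict Implicit. Unset Printing Implicit Defensive.

Lemma sigmaE (T : finType) (e : rel T) u v :
  sigma e u v = #|nbhd e u :\: nbhd e v| * #|nbhd e v :\: nbhd e u|.
Proof.
by rewrite /sigma /deg /eta !cardsD setIC.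
Qed.

Lemma prod0 (T : finType) (A B : {set T}) :
  #|A :\: B| * #|B :\: A| = 0 -> A \subset B \/ B \subset A.
Proof.
move/eqP; rewrite muln_eq0 !cards_eq0 !setD_eq0 => /orP[]; by [left|right].
Qed.

Lemma key (T : finType) (A B C D : {set T}) :
  #|B :\: C| * #|C :\: B| = 1 -> (A \subset C \/ C \subset A) -> ~~ (A \subset B) ->
  (D \subset B \/ B \subset D) -> ~~ (D \subset C) -> (A \subset D \/ D \subset A) ->
  #|A| <= #|B| -> #|D| <= #|B| -> False.
Proof.
move=> /eqP; rewrite muln_eq1 => /andP[/eqP h1 /eqP h2] hAC nAB hDB nDC hAD lA lD.
have eBC : #|B| = #|C|.
  by rewrite -(cardsID C B) -(cardsID B C) h1 h2 setIC.
have sAC : A \subset C.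
  case: hAC => // sCA.
  have : C == A by rewrite eqEcard sCA -eBC.
  by move/eqP->.
have sDB : D \subset B.
  case: hDB => // sBD.
  have : B == D by rewrite eqEcard sBD.
  by move/eqP->.
have /cards1P [a ha] : #|B :\: C| == 1 by rewrite h1.
have /cards1P [b hb] : #|C :\: B| == 1 by rewrite h2.
have [x xA xB] := subsetPn nAB.
have [y yD yC] := subsetPn nDC.
have xb : x \in C :\: B by rewrite inE xB (subsetP sAC).
have ya : y \in B :\: C by rewrite inE yC (subsetP sDB).
rewrite hb inE in xb; rewrite ha inE in ya.
move/eqP: xb => xb; move/eqP: ya => ya; subst x y.
case: hAD => s.
- by move: xB; rewrite (subsetP sDB) // (subsetP s).
- by move: yC; rewrite (subsetP sAC) // (subsetP s).
Qed.

Theorem lemma4p2 (T : finType) (e : rel T) (K I : {set T}) :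
  split_graph e K I ->
  ~ exists v1 v2 v3 v4 : T,
      [/\ phi_induced_P4 e I v1 v2 v3 v4,
          sigma e v2 v3 = 1,
          deg e v1 <= deg e v2 &
          deg e v4 <= deg e v2].
Proof.
move=> _ [v1 [v2 [v3 [v4 [[[i1 i2 i3 i4] [U [[a12 a23 a34] [n13 n14 n24]]]] s23 d1 d4]]]]].
move: U; rewrite /= !inE !negb_or => /and4P[/and3P[u12 u13 u14] /andP[u23 u24] u34 _].
have z : forall u v, u \in I -> v \in I -> u != v -> ~~ phi_adj e I u v ->
  nbhd e u \subset nbhd e v \/ nbhd e v \subset nbhd e u.
  move=> u v iu iv uv; rewrite /phi_adj iu iv uv /= -leqNgt leqn0 sigmaE => /eqP.
  exact: prod0.
have p : forall u v, phi_adj e I u v -> ~~ (nbhd e u \subset nbhd e v).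
  move=> u v /and4P[_ _ _]; rewrite sigmaE muln_gt0 => /andP[].
  by rewrite card_gt0 setD_eq0.
have p' : forall u v, phi_adj e I u v -> ~~ (nbhd e v \subset nbhd e u).
  move=> u v /and4P[_ _ _]; rewrite sigmaE muln_gt0 => /andP[_].
  by rewrite card_gt0 setD_eq0.
apply: (@key T (nbhd e v1) (nbhd e v2) (nbhd e v3) (nbhd e v4)).
- by rewrite -sigmaE.
- exact: z.
- exact: p.
- by case: (z v2 v4) => // h; [right|left].
- exact: p' a34.
- exact: z.
- exact: d1.
- exact: d4.
Qed.
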